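(* Let $a\ge6$ and $n\ge1$ be integers and let $P_{0,n}$, $P_{l,n}$ be as in the context. Then for every $l\in\{1,\dots,a\}$, $$2d_n^{a-l}P_{l,n}(z)\in\mathbb{Z}[z]\qquad\text{and}\qquad 2d_n^{a+2}P_{0,n}(z)\in\mathbb{Z}[z],$$ where $d_n=\mathrm{lcm}(1,2,\dots,n)$.
   Context: Fix an integer $a\ge 6$. For complex $x$ and integer $m\ge0$, $(x)_m=x(x+1)\cdots(x+m-1)$. For an integer $n\ge1$ define $$R_n(t)=n!^{a-6}\left(t+\frac n2\right)\frac{(t-n)_n^3\,(t+n+1)_n^3}{(t)_{n+1}^a}.$$ Let $D_\lambda=\frac1{\lambda!}\left(\frac{d}{dt}\right)^\lambda$ and, for $l\in\{1,\dots,a\}$, $j\in\{0,\dots,n\}$, put $c_{l,j,n}=D_{a-l}\big(R_n(t)(t+j)^a\big)\big|_{t=-j}$. Define $$P_{0,n}(z)=-\sum_{l=1}^a\sum_{j=1}^n\sum_{k=1}^{j}\frac{l(l+1)\,c_{l,j,n}}{2k^{l+2}}z^{j-k},\qquad P_{l,n}(z)=\sum_{j=0}^n c_{l,j,n}z^j\quad(1\le l\le a).$$ *)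

(* Defs.v *)
From HB Require Import structures.
From mathcomp Require Import all_boot all_order all_algebra.
From mathcomp Require Import all_classical all_reals all_analysis.
Set Implicit Arguments. Unset Strict Implicit. Unset Printing Implicit Defensive.
Import Order.TTheory GRing.Theory Num.Theory.
Local Open Scope ring_scope.

Section Defs.
Variable R : realType.

Definition poch (x : R) (m : nat) : R := \prod_(i < m) (x + i%:R).

Definition Rn (a n : nat) (t : R) : R :=
  (n`!%:R) ^+ (a - 6) * (t + n%:R / 2) * (poch (t - n%:R) n) ^+ 3
  * (poch (t + n%:R + 1) n) ^+ 3 / (poch t n.+1) ^+ a.

(* The rational function R_n(t) (t+j)^a, with the factor (t+j)^a cancelled
   against the factor (t+j)^a of (t)_(n+1)^a (j in 0..n); this is a function
   regular near t = -j, equal to R_n(t)(t+j)^a for t not in {0,-1,...,-n}. *)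
Definition Rnj (a n j : nat) (t : R) : R :=
  (n`!%:R) ^+ (a - 6) * (t + n%:R / 2) * (poch (t - n%:R) n) ^+ 3
  * (poch (t + n%:R + 1) n) ^+ 3
  / \prod_(k < n.+1 | k != j :> nat) (t + k%:R) ^+ a.

Definition Dl (lam : nat) (f : R -> R) (x : R) : R :=
  derive1n lam f x / (lam`!)%:R.

Definition cc (a l j n : nat) : R := Dl (a - l) (Rnj a n j) (- j%:R).

Definition Pl (a l n : nat) : {poly R} :=
  \sum_(j < n.+1) cc a l j n *: 'X^j.

Definition P0 (a n : nat) : {poly R} :=
  - \sum_(1 <= l < a.+1) \sum_(1 <= j < n.+1) \sum_(1 <= k < j.+1)
      (((l * l.+1)%:R * cc a l j n) / (2 * k%:R ^+ (l + 2))) *: 'X^(j - k).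

End Defs.

Definition dn (n : nat) : nat := \big[lcmn/1%N]_(1 <= i < n.+1) i.

(* Main.v *)
Require Import Defs.
From HB Require Import structures.
From mathcomp Require Import all_boot all_order all_algebra.
From mathcomp Require Import all_classical all_reals all_analysis.
Import Order.TTheory GRing.Theory Num.Theory.
Local Open Scope ring_scope.
Import numFieldNormedType.Exports.
From mathcomp Require Import ring lra zify.

Set Implicit Arguments. Unset Strict Implicit.

Section Analytic.
Variable R : realType.
Implicit Types (f g : R -> R) (U : set R) (t : R).

Lemma open_near U (t : R) : open U -> U t -> \forall s \near t, U s.
Proof. by move=> oU Ut; have := open_nbhs_nbhs (conj oU Ut). Qed.

Definition smooth U f := forall m t, U t -> derivable (derive1n m f) t 1.

Lemma derive1n_loc U f g : open U -> (forall t, U t -> f t = g t) ->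
  forall m t, U t -> derive1n m f t = derive1n m g t.
Proof.
move=> oU fg m; elim: m => [|m IH] t Ut; first by rewrite !derive1n0; apply fg.
rewrite !derive1nS !derive1E; apply: near_eq_derive.
near=> s; apply: IH; near: s; exact: open_near.
Unshelve. all: by end_near. Qed.

Arguments derive1n_loc {U f g}.

Lemma smooth_loc U f g : open U -> (forall t, U t -> f t = g t) ->
  smooth U f -> smooth U g.
Proof.
move=> oU fg sf m t Ut; apply: (near_eq_derivable _ (sf m t Ut)).
near=> s; apply: (derive1n_loc oU fg); near: s; exact: open_near.
Unshelve. all: by end_near. Qed.

Lemma derive1n_cst (c : R) m : derive1n m.+1 (fun _ => c) = fun _ => 0.
Proof.
elim: m => [|m IH]; first by rewrite derive1n1; apply/funext => t; exact: derive1_cst.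
by rewrite derive1nS IH; apply/funext => t; exact: derive1_cst.
Qed.

Lemma smooth_cst U (c : R) : smooth U (fun _ => c).
Proof.
by move=> [|m] t _; [rewrite derive1n0; exact: derivable_cst|
   rewrite derive1n_cst; exact: derivable_cst].
Qed.

Lemma derive1n_shift (c : R) m : derive1n m.+2 (fun t => t + c) = fun _ => 0.
Proof.
rewrite /derive1n iterSr iterSr.
have -> : derive1 (fun t : R => t + c) = fun _ => 1.
  apply/funext => t; rewrite derive1E.
  by have := derive_shift (1:R) c; move/(congr1 (fun h => h t)).
have := derive1n_cst 1 m; rewrite /derive1n iterSr => ->.
by [].
Qed.

Lemma derive1n_shift1 (c : R) : derive1n 1 (fun t => t + c) = fun _ => 1.
Proof.
rewrite derive1n1; apply/funext => t; rewrite derive1E.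
by have := derive_shift (1:R) c; move/(congr1 (fun h => h t)).
Qed.

Lemma smooth_shift U (c : R) : smooth U (fun t => t + c).
Proof.
move=> [|[|m]] t _.
- rewrite derive1n0; apply: derivableD; [exact: derivable_id|exact: derivable_cst].
- rewrite derive1n_shift1; exact: derivable_cst.
- rewrite derive1n_shift; exact: derivable_cst.
Qed.


Lemma derive1nD U f g : open U -> smooth U f -> smooth U g ->
  forall m t, U t ->
  derive1n m (fun s => f s + g s) t = derive1n m f t + derive1n m g t.
Proof.
move=> oU sf sg m; elim: m => [|m IH] t Ut; first by rewrite !derive1n0.
rewrite !derive1nS !derive1E.
rewrite (@near_eq_derive _ _ _ _ (derive1n m f + derive1n m g)); last first.
  near=> s; apply: IH; near: s; exact: open_near.
by rewrite deriveD //; [exact: sf | exact: sg].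
Unshelve. all: by end_near. Qed.

Arguments derive1nD {U f g}.

Lemma smoothD U f g : open U -> smooth U f -> smooth U g ->
  smooth U (fun s => f s + g s).
Proof.
move=> oU sf sg m t Ut.
apply: (@near_eq_derivable _ _ _ (derive1n m f + derive1n m g)).
  near=> s; rewrite [RHS](derive1nD oU sf sg) //; near: s; exact: open_near.
by apply: derivableD; [exact: sf|exact: sg].
Unshelve. all: by end_near. Qed.

Lemma derive1nZ U f (c : R) : open U -> smooth U f ->
  forall m t, U t -> derive1n m (fun s => c * f s) t = c * derive1n m f t.
Proof.
move=> oU sf m; elim: m => [|m IH] t Ut; first by rewrite !derive1n0.
rewrite !derive1nS !derive1E.
rewrite (@near_eq_derive _ _ _ _ (c \*o derive1n m f)); last first.
  near=> s; apply: IH; near: s; exact: open_near.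
by rewrite deriveMl //; exact: sf.
Unshelve. all: by end_near. Qed.

Arguments derive1nZ {U f} c.

Lemma smoothZ U f (c : R) : open U -> smooth U f -> smooth U (fun s => c * f s).
Proof.
move=> oU sf m t Ut.
apply: (@near_eq_derivable _ _ _ (c \*o derive1n m f)).
  near=> s; rewrite [RHS](derive1nZ c oU sf) //; near: s; exact: open_near.
by apply: derivableM; [exact: derivable_cst|exact: sf].
Unshelve. all: by end_near. Qed.

Lemma derive1n_zero m t : derive1n m (fun _ : R => 0 : R) t = 0.
Proof. by case: m => [|m]; [rewrite derive1n0|rewrite derive1n_cst]. Qed.

Lemma smooth_sum U (I : Type) (r : seq I) (P : pred I) (F : I -> R -> R) :
  open U -> (forall i, P i -> smooth U (F i)) ->
  smooth U (fun s => \sum_(i <- r | P i) F i s) /\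
  forall m t, U t -> derive1n m (fun s => \sum_(i <- r | P i) F i s) t =
                     \sum_(i <- r | P i) derive1n m (F i) t.
Proof.
move=> oU sF; elim: r => [|i r [IH1 IH2]].
  have -> : (fun s => \sum_(i <- [::] | P i) F i s) = (fun _ => 0).
    by apply/funext => s; rewrite big_nil.
  by split; [exact: smooth_cst|move=> m t _; rewrite big_nil derive1n_zero].
case Pi: (P i).
  have -> : (fun s => \sum_(j <- i :: r | P j) F j s) =
            (fun s => F i s + \sum_(j <- r | P j) F j s).
    by apply/funext => s; rewrite big_cons Pi.
  split; first by apply: smoothD => //; exact: sF.
  by move=> m t Ut; rewrite big_cons Pi (derive1nD oU (sF i Pi) IH1) // IH2.
have -> : (fun s => \sum_(j <- i :: r | P j) F j s) =
          (fun s => \sum_(j <- r | P j) F j s).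
  by apply/funext => s; rewrite big_cons Pi.
by split => // m t Ut; rewrite big_cons Pi IH2.
Qed.


Lemma pascal (u v : nat -> R) m :
  \sum_(0 <= i < m.+1) 'C(m,i)%:R * (u i * v (m.+1 - i)%N + u i.+1 * v (m - i)%N) =
  \sum_(0 <= i < m.+2) 'C(m.+1,i)%:R * (u i * v (m.+1 - i)%N).
Proof.
rewrite [RHS]big_nat_recl //.
under [X in _ = _ + X]eq_bigr do rewrite binS natrD mulrDl subSS.
rewrite big_split /=.
under eq_bigr do rewrite mulrDr.
rewrite big_split /= addrA; congr (_ + _).
rewrite big_nat_recl // [X in _ = _ + X]big_nat_recr //= bin0 (bin_small (ltnSn m)).
rewrite mul0r addr0; congr (_ + _).
Qed.


Lemma leibniz_eq U f g : open U -> smooth U f -> smooth U g ->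
  forall m t, U t -> derive1n m (fun s => f s * g s) t =
   \sum_(0 <= i < m.+1) 'C(m,i)%:R * (derive1n i f t * derive1n (m - i)%N g t).
Proof.
move=> oU sf sg m; elim: m => [|m IH] t Ut.
  by rewrite big_nat1 !derive1n0 bin0 mul1r.
rewrite derive1nS derive1E.
rewrite (@near_eq_derive _ _ _ _ (\sum_(i < m.+1) ('C(m,i)%:R \*o (derive1n i f * derive1n (m - i)%N g)))); last first.
  near=> s; rewrite IH; [|near: s; exact: open_near].
  by rewrite big_mkord fct_sumE.
rewrite derive_sum; last first.
  move=> i; apply: derivableM; first exact: derivable_cst.
  by apply: derivableM; [exact: sf|exact: sg].
under eq_bigr => i _.
  rewrite deriveMl; last by apply: derivableM; [exact: sf|exact: sg].
  rewrite deriveM; [|exact: sf|exact: sg].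
  rewrite -!derive1E -!derive1nS.
over.
have := pascal (fun i => derive1n i f t) (fun i => derive1n i g t) m.
rewrite /= => <-; rewrite big_mkord; apply: eq_bigr => i _ /=.
rewrite -!derive1nS (subSn (ltn_ord i : (i <= m)%N)).
congr (_ * (_ + _)); exact: mulrC.
Unshelve. all: by end_near. Qed.


Arguments leibniz_eq {U f g}.

Lemma smoothM U f g : open U -> smooth U f -> smooth U g ->
  smooth U (fun s => f s * g s).
Proof.
move=> oU sf sg m t Ut.
apply: (@near_eq_derivable _ _ _ (\sum_(i < m.+1) ('C(m,i)%:R \*o (derive1n i f * derive1n (m - i)%N g)))).
  near=> s; rewrite (leibniz_eq oU sf sg); [|near: s; exact: open_near].
  by rewrite big_mkord fct_sumE.
apply: derivable_sum => i; apply: derivableM; first exact: derivable_cst.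
by apply: derivableM; [exact: sf|exact: sg].
Unshelve. all: by end_near. Qed.

Lemma leibniz_norm U f g : open U -> smooth U f -> smooth U g ->
  forall m t, U t -> derive1n m (fun s => f s * g s) t / m`!%:R =
   \sum_(0 <= i < m.+1) (derive1n i f t / i`!%:R) *
                        (derive1n (m - i)%N g t / (m - i)`!%:R).
Proof.
move=> oU sf sg m t Ut; rewrite (leibniz_eq oU sf sg) // mulr_suml.
apply: eq_big_nat => i /andP[_ Hi]; rewrite ltnS in Hi.
have E : ('C(m,i) * (i`! * (m-i)`!))%:R = m`!%:R :> R by rewrite bin_fact.
rewrite -E !natrM.
have h1 : 'C(m,i)%:R != 0 :> R by rewrite pnatr_eq0 -lt0n bin_gt0.
have h2 : i`!%:R != 0 :> R by rewrite pnatr_eq0 -lt0n fact_gt0.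
have h3 : (m-i)`!%:R != 0 :> R by rewrite pnatr_eq0 -lt0n fact_gt0.
by field; rewrite h1 h2 h3.
Qed.

Lemma derive1n_inv U (c : R) : open U -> (forall t, U t -> t + c != 0) ->
  forall m t, U t -> derive1n m (fun s => (s + c)^-1) t =
      (-1) ^+ m * m`!%:R * ((t + c)^-1) ^+ m.+1.
Proof.
move=> oU Uc m; elim: m => [|m IH] t Ut.
  by rewrite derive1n0 expr0 mul1r mul1r expr1.
rewrite derive1nS derive1E.
rewrite (@near_eq_derive _ _ _ _ (((-1) ^+ m * m`!%:R) \*o (fun s => (s + c)^-1) ^+ m.+1)); last first.
  near=> s; rewrite IH; last by near: s; exact: open_near.
  by rewrite /= exprfctE.
have d1 : derivable (fun s => s + c) t 1.
  by apply: derivableD; [exact: derivable_id|exact: derivable_cst].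
have d2 : derivable (fun s => (s + c)^-1) t 1 by apply: derivableV => //; exact: Uc.
rewrite deriveMl; last exact: derivableX.
rewrite deriveX // deriveV //; last exact: Uc.
have -> : 'D_1 (fun s => s + c) t = 1.
  by have := derive_shift (1:R) c; move/(congr1 (fun h => h t)).
have := Uc t Ut; set y := t + c => y0.
rewrite /= factS natrM exprS.
rewrite expr1 invfM; set z := y^-1. rewrite scalerA. rewrite [_ *: 1]mulr1. rewrite !exprS; ring.
Unshelve. all: by end_near. Qed.


Arguments derive1n_inv {U} c.

Lemma smooth_inv U (c : R) : open U -> (forall t, U t -> t + c != 0) ->
  smooth U (fun s => (s + c)^-1).
Proof.
move=> oU Uc m t Ut.
apply: (@near_eq_derivable _ _ _ (((-1) ^+ m * m`!%:R) \*o (fun s => (s + c)^-1) ^+ m.+1)).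
  near=> s; rewrite (derive1n_inv c oU Uc); last by near: s; exact: open_near.
  by rewrite /= exprfctE.
apply: derivableM; first exact: derivable_cst.
apply: derivableX; apply: derivableV; first exact: Uc.
by apply: derivableD; [exact: derivable_id|exact: derivable_cst].
Unshelve. all: by end_near. Qed.

End Analytic.

Unset Implicit Arguments.

Section Comb.
Variable R : realType.

Lemma prod_shift (i : nat) : \prod_(k < i) (k%:R - i%:R : R) = (-1)^+i * i`!%:R.
Proof.
elim: i => [|i IH]; first by rewrite big_ord0 expr0 mul1r.
rewrite big_ord_recl /=.
have E (k : nat) : (k.+1%:R - i.+1%:R : R) = k%:R - i%:R.
  by rewrite -[k.+1]addn1 -[i.+1]addn1 !natrD; ring.
under eq_bigr => k _ do rewrite /bump /= add1n E.
rewrite IH factS natrM exprS; ring.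
Qed.

Lemma prod_diff (i n : nat) : (i <= n)%N ->
  \prod_(k < n.+1 | k != i :> nat) (k%:R - i%:R : R) =
  (-1)^+i * (i`! * (n - i)`!)%:R.
Proof.
elim: n => [|n IH] Hi.
  move: Hi; rewrite leqn0 => /eqP ->.
  by rewrite big_mkcond big_ord1 /= expr0 mul1r.
rewrite big_mkcond big_ord_recr /=.
case: (ltngtP i n.+1) => [Hin|Hin|Hin].
- rewrite /= -big_mkcond IH // subSn // factS -subSn // !natrM natrB //.
  ring.
- by move: Hi; rewrite leqNgt Hin.
- rewrite /= mulr1 Hin subnn fact0 muln1.
  rewrite (eq_bigr (fun k : 'I_n.+1 => (k%:R - n.+1%:R : R))); first exact: prod_shift.
  move=> k _; rewrite (_ : (k : nat) != n.+1) //.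
  by rewrite neq_ltn ltn_ord.
Qed.


Variable n : nat.

Definition P1 : {poly R} := \prod_(k < n) ('X - (n%:R - k%:R)%:P).
Definition P2 : {poly R} := \prod_(k < n) ('X - (-(n%:R + 1 + k%:R))%:P).
Definition P3 : {poly R} := (n`!%:R)%:P.

Lemma size_P1 : (size P1 <= n.+1)%N.
Proof. by rewrite size_prod_XsubC /index_enum unlock -enumT size_enum_ord. Qed.
Lemma size_P2 : (size P2 <= n.+1)%N.
Proof. by rewrite size_prod_XsubC /index_enum unlock -enumT size_enum_ord. Qed.
Lemma size_P3 : (size P3 <= n.+1)%N.
Proof. by rewrite size_polyC; case: (_ != 0). Qed.

Lemma fact_neq0 m : m`!%:R != 0 :> R.
Proof. by rewrite pnatr_eq0 -lt0n fact_gt0. Qed.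

Lemma P1_val i : (i <= n)%N -> P1.[- i%:R] = (-1)^+n * ('C(i + n, n) * n`!)%:R.
Proof.
move=> Hi; rewrite horner_prod.
have E (k : 'I_n) : - i%:R - (n%:R - k%:R) = - ((i + n - k)%N%:R : R).
  have := ltn_ord k => hk; rewrite natrB ?natrD; [ring|lia].
under eq_bigr => k _ do rewrite hornerXsubC E.
by rewrite prodrN card_ord -natr_prod -ffact_prod bin_ffact.
Qed.

Lemma P2_val i : (i <= n)%N -> P2.[- i%:R] = ('C(n + n - i, n) * n`!)%:R.
Proof.
move=> Hi; rewrite horner_prod (reindex_inj rev_ord_inj) /=.
have E (k : 'I_n) : - i%:R - - (n%:R + 1 + (n - k.+1)%N%:R) = ((n + n - i - k)%N%:R : R).
  have := ltn_ord k => hk; rewrite !natrB ?natrD; [ring|lia|lia|lia].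
under eq_bigr => k _ do rewrite hornerXsubC E.
by rewrite -natr_prod -ffact_prod bin_ffact.
Qed.

End Comb.

Definition IntD (R : realType) (x0 : R) (d : nat) (w : R) (f : R -> R) :=
  forall m, w * d%:R ^+ m * (derive1n m f x0 / m`!%:R) \is a Num.int.

Arguments IntD {R}.

Section HFun.
Variable R : realType.
Variables (n j d : nat) (P : {poly R}).
Hypothesis hj : (j <= n)%N.
Hypothesis hd : forall k, (0 < k <= n)%N -> (k %| d)%N.
Hypothesis sP : (size P <= n.+1)%N.
Hypothesis intP : forall i, (i <= n)%N -> P.[- i%:R] / n`!%:R \is a Num.int.

Definition xs (k : nat) : R := - k%:R.

Lemma xs_inj : injective xs.
Proof. by move=> a b /oppr_inj /eqP; rewrite eqr_nat => /eqP. Qed.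

Definition Aco (i : 'I_n.+1) : R :=
  P.[xs i] / \prod_(k < n.+1 | k != i) (xs i - xs k).

Lemma Aco_int i : Aco i \is a Num.int.
Proof.
have hi : (i <= n)%N by rewrite -ltnS.
rewrite /Aco.
rewrite (eq_bigr (fun k : 'I_n.+1 => (k%:R - i%:R : R))); last first.
  by move=> k _; rewrite /xs opprK addrC.
rewrite (eq_bigl (fun k : 'I_n.+1 => k != i :> nat)) //.
rewrite prod_diff //.
have E : ('C(n, i) * (i`! * (n - i)`!))%:R = n`!%:R :> R by rewrite bin_fact.
have -> : P.[xs i] / ((-1) ^+ i * (i`! * (n - i)`!)%:R) =
          (P.[- i%:R] / n`!%:R) * ((-1) ^+ i * 'C(n, i)%:R).
  rewrite -E natrM /xs.
  have h1 : 'C(n,i)%:R != 0 :> R by rewrite pnatr_eq0 -lt0n bin_gt0.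
  have h2 : (i`! * (n - i)`!)%:R != 0 :> R by rewrite natrM mulf_neq0 // fact_neq0.
  have h3 : ((-1) ^+ i : R) != 0 by rewrite expf_neq0 // oppr_eq0 oner_eq0.
  rewrite natrM mulf_eq0 negb_or in h2; case/andP: h2 => h2 h4.
  have hs : ((-1)^+i : R)^-1 = (-1)^+i by rewrite -exprVn invrN1.
  rewrite invfM hs.
  move: h1 h2 h3 h4; rewrite !natrM.
  set s := (-1) ^+ i; set c := 'C(n,i)%:R; set f1 := i`!%:R; set f2 := (n-i)`!%:R.
  move=> h1 h2 h3 h4; field.
  by rewrite h1 h2 h4.
by rewrite rpredM ?intP // rpredM ?rpredX ?rpredN ?rpred1 ?natr_int.
Qed.

Lemma lagr t : P.[t] = \sum_(i < n.+1) Aco i * \prod_(k < n.+1 | k != i) (t - xs k).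
Proof.
rewrite {1}(lagrange_gen (ltn0Sn n) xs_inj sP) horner_sum.
apply: eq_bigr => i _; rewrite (lagrangeE (ltn0Sn n) xs_inj) /= !hornerM !hornerC.
rewrite !horner_prod /Aco mulrA; congr (_ * _^-1 * _); apply: eq_bigr => k _; exact: hornerXsubC.
Qed.


Definition U : set R := ball (xs j) (2^-1).

Lemma U_open : open U.
Proof. exact: ball_open. Qed.

Lemma U_x0 : U (xs j).
Proof. by apply: ballxx; rewrite invr_gt0. Qed.

Lemma dist_nat (k : nat) : k != j -> 1 <= `|k%:R - j%:R : R|.
Proof.
move=> nk; case: (ltngtP k j) => hk.
- by rewrite -normrN opprB -natrB ?normr_nat ?ler1n ?subn_gt0 // ltnW.
- by rewrite -natrB ?normr_nat ?ler1n ?subn_gt0 // ltnW.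
- by rewrite hk eqxx in nk.
Qed.

Lemma U_ok t (k : nat) : U t -> k != j -> t + k%:R != 0.
Proof.
rewrite /U -ball_normE /ball_ /= /xs => H nk; apply/eqP => E.
have := dist_nat k nk.
have -> : k%:R - j%:R = - j%:R - t :> R.
  by rewrite (_ : t = - k%:R); [ring | apply/eqP; rewrite -subr_eq0 opprK E].
move: H; set z := `|_|; move=> H1 H2.
have : (2^-1 : R) < 1 by rewrite invf_lt1 // ltr1n.
move=> H3; have := lt_le_trans H1 (le_trans (ltW H3) H2); by rewrite ltxx.
Qed.


Definition j0 : 'I_n.+1 := inord j.
Lemma j0E : (j0 : nat) = j. Proof. by rewrite inordK // ltnS. Qed.

Lemma neq_j0 (k : 'I_n.+1) : (k != j0) = (k != j :> nat).
Proof. by rewrite -val_eqE /= j0E. Qed.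

Definition Lt (t : R) := \prod_(k < n.+1 | k != j :> nat) (t + k%:R).

Lemma Lt_neq0 t : U t -> Lt t != 0.
Proof. by move=> Ut; apply/prodf_neq0 => k nk; exact: U_ok. Qed.

Lemma Li_eq t (i : 'I_n.+1) :
  \prod_(k < n.+1 | k != i) (t - xs k) = \prod_(k < n.+1 | k != i) (t + k%:R).
Proof. by apply: eq_bigr => k _; rewrite /xs opprK. Qed.

Lemma Li_rel t (i : 'I_n.+1) :
  \prod_(k < n.+1 | k != i) (t + k%:R) * (t + i%:R) = Lt t * (t + j%:R).
Proof.
have Hf (l : 'I_n.+1) : \prod_(k < n.+1) (t + k%:R) =
    (t + l%:R) * \prod_(k < n.+1 | k != l) (t + k%:R) by rewrite (bigD1 l).
rewrite mulrC -Hf (Hf j0) mulrC j0E /Lt; congr (_ * _); apply: eq_bigl => k.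
exact: neq_j0.
Qed.

Definition G (t : R) : R := Aco j0 + \sum_(i < n.+1 | i != j0)
   (Aco i + (- (Aco i * (i%:R - j%:R))) * (t + i%:R)^-1).

Lemma HG t : U t -> P.[t] / Lt t = G t.
Proof.
move=> Ut; have L0 := Lt_neq0 _ Ut.
rewrite lagr mulr_suml (bigD1 j0) //=; congr (_ + _).
  rewrite Li_eq (_ : \prod_(k < n.+1 | k != j0) (t + k%:R) = Lt t) ?mulfK //.
  by apply: eq_bigl => k; exact: neq_j0.
apply: eq_bigr => i ni; rewrite neq_j0 in ni.
have ti0 := U_ok _ _ Ut ni.
rewrite Li_eq (_ : \prod_(k < n.+1 | k != i) (t + k%:R) = Lt t * (t + j%:R) / (t + i%:R)).
  by field; rewrite L0 ti0.
by apply: (mulIf ti0); rewrite Li_rel mulfVK.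
Qed.


Lemma dq (i : nat) : (i <= n)%N -> i != j -> (d%:R * (xs j + i%:R)^-1 : R) \is a Num.int.
Proof.
move=> hi nij; have -> : xs j + i%:R = i%:R - j%:R by rewrite /xs addrC.
case: (ltngtP i j) => hk.
- rewrite -opprB -natrB ?(ltnW hk) // invrN mulrN rpredN -natf_div ?natr_int //.
  by apply: hd; rewrite subn_gt0 hk /= (leq_trans (leq_subr _ _) hj).
- rewrite -natrB ?(ltnW hk) // -natf_div ?natr_int //.
  by apply: hd; rewrite subn_gt0 hk /= (leq_trans (leq_subr _ _) hi).
- by rewrite hk eqxx in nij.
Qed.

Definition Fi (i : 'I_n.+1) : R -> R :=
  fun t => (fun _ => Aco i) t + (fun t => (- (Aco i * (i%:R - j%:R))) * (t + i%:R)^-1) t.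

Lemma Fi_smooth (i : 'I_n.+1) : i != j0 -> smooth U (Fi i).
Proof.
move=> ni; rewrite neq_j0 in ni.
apply: smoothD; [exact: U_open|exact: smooth_cst|].
apply: smoothZ; first exact: U_open.
by apply: smooth_inv; [exact: U_open|move=> t Ut; exact: U_ok].
Qed.

Lemma Fi_der (i : 'I_n.+1) m : i != j0 ->
  derive1n m.+1 (Fi i) (xs j) = (- (Aco i * (i%:R - j%:R))) *
     ((-1) ^+ m.+1 * m.+1`!%:R * ((xs j + i%:R)^-1) ^+ m.+2).
Proof.
move=> ni; have ni' := ni; rewrite neq_j0 in ni'.
have oU := U_open.
have si : smooth U (fun t => (t + i%:R)^-1).
  by apply: smooth_inv => // t Ut; exact: U_ok.
rewrite /Fi (derive1nD oU) //; last exact: U_x0.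
- rewrite derive1n_cst add0r (derive1nZ _ oU si) //; last exact: U_x0.
  by rewrite (derive1n_inv oU) //; [move=> t Ut; exact: U_ok|exact: U_x0].
- exact: smooth_cst.
- exact: smoothZ.
Qed.

Definition Hf (t : R) : R := P.[t] / Lt t.

Lemma G_smooth : smooth U G.
Proof.
have oU := U_open.
have -> : G = fun t => (fun _ => Aco j0) t +
    (fun t => \sum_(i < n.+1 | i != j0) Fi i t) t by [].
apply: smoothD => //; first exact: smooth_cst.
exact: (smooth_sum _ oU Fi_smooth).1.
Qed.

Lemma Hf_smooth : smooth U Hf.
Proof.
apply: (smooth_loc U_open _ G_smooth) => t Ut.
by rewrite /Hf HG.
Qed.

Lemma Hf_IntD : IntD (xs j) d 1 Hf.
Proof.
have oU := U_open.
case => [|m].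
  rewrite derive1n0 expr0 fact0 !mul1r divr1 /Hf /Lt.
  have -> : P.[xs j] / \prod_(k < n.+1 | k != j :> nat) (xs j + k%:R) = Aco j0.
    rewrite /Aco j0E; congr (_ / _); apply: eq_big => k.
      by rewrite neq_j0.
    by move=> _; rewrite /xs opprK.
  exact: Aco_int.
have E1 : derive1n m.+1 Hf (xs j) = derive1n m.+1 G (xs j).
  apply: (derive1n_loc oU); last exact: U_x0.
  by move=> t Ut; rewrite /Hf HG.
have sS := (smooth_sum (index_enum 'I_n.+1) oU Fi_smooth).
have E2 : derive1n m.+1 G (xs j) = \sum_(i < n.+1 | i != j0) derive1n m.+1 (Fi i) (xs j).
  have -> : G = fun t => (fun _ => Aco j0) t +
    (fun t => \sum_(i < n.+1 | i != j0) Fi i t) t by [].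
  rewrite (derive1nD oU (@smooth_cst R U (Aco j0)) sS.1 _ U_x0).
  by rewrite derive1n_cst add0r (sS.2 _ _ U_x0).
rewrite E1 E2.
rewrite mul1r mulr_suml mulr_sumr; apply: rpred_sum => i ni.
rewrite Fi_der //.
have ni' := ni; rewrite neq_j0 in ni'.
have hi : (i <= n)%N by rewrite -ltnS.
have hz : xs j + i%:R != 0 by apply: U_ok => //; exact: U_x0.
have hzz : (i%:R - j%:R) * (xs j + i%:R)^-1 = 1 :> R.
  by rewrite (_ : i%:R - j%:R = xs j + i%:R) ?mulfV // /xs addrC.
move: hzz (dq i hi ni') (fact_neq0 R m.+1).
set z := (xs j + i%:R)^-1; set y := i%:R - j%:R; set s := (-1) ^+ m.+1.
set f := m.+1`!%:R; set D := d%:R => hzz hD hf.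
have -> : D ^+ m.+1 * (- (Aco i * y) * (s * f * z ^+ m.+2) / f) =
   - Aco i * s * (D * z) ^+ m.+1 * (y * z).
  rewrite exprMn (exprS z m.+1).
  set Dm := D ^+ m.+1; set zm := z ^+ m.+1; set A := Aco i.
  by field.
by rewrite hzz mulr1 rpredM ?rpredX // rpredM ?rpredN ?Aco_int // rpredX ?rpredN ?rpred1.
Qed.
End HFun.

Set Implicit Arguments. Unset Strict Implicit.

Section Clos.
Variable R : realType.
Variables (U : set R) (x0 : R) (d : nat).
Hypothesis oU : open U.
Hypothesis Ux0 : U x0.

Lemma IntD_M w1 w2 f g : smooth U f -> smooth U g ->
  IntD x0 d w1 f -> IntD x0 d w2 g -> IntD x0 d (w1 * w2) (fun s => f s * g s).
Proof.
move=> sf sg If Ig m.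
rewrite (leibniz_norm oU sf sg m Ux0) mulr_sumr big_nat.
apply: rpred_sum => i /andP[_ hi]; rewrite ltnS in hi.
have E : d%:R ^+ m = d%:R ^+ i * d%:R ^+ (m - i) :> R by rewrite -exprD subnKC.
have := If i; have := Ig (m - i)%N; rewrite E.
set a := d%:R ^+ i; set b := d%:R ^+ (m - i).
set u := derive1n i f x0 / i`!%:R; set v := derive1n (m - i) g x0 / (m - i)`!%:R.
move=> h1 h2.
have -> : w1 * w2 * (a * b) * (u * v) = (w1 * a * u) * (w2 * b * v) by ring.
exact: rpredM.
Qed.

Lemma IntD_X f : smooth U f -> IntD x0 d 1 f ->
  forall k, smooth U (fun s => f s ^+ k) /\ IntD x0 d 1 (fun s => f s ^+ k).
Proof.
move=> sf If; elim => [|k [IH1 IH2]].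
  split; first exact: smooth_cst.
  case => [|m]; first by rewrite derive1n0 /= !expr0 fact0 mulr1n divr1 !mul1r rpred1.
  by rewrite (derive1n_cst (1 : R)) mul0r mulr0 rpred0.
have -> : (fun s => f s ^+ k.+1) = (fun s => f s * f s ^+ k).
  by apply/funext => s; rewrite exprS.
split; first exact: smoothM.
rewrite -(mulr1 1); exact: IntD_M.
Qed.

Lemma IntD_shift c : 2 * (x0 + c) \is a Num.int -> IntD x0 d 2 (fun s => s + c).
Proof.
move=> h; case => [|[|m]].
- by rewrite derive1n0 expr0 fact0 mulr1n divr1 mulr1.
- by rewrite derive1n_shift1 expr1 (_ : 1`! = 1%N) // mulr1n divr1 mulr1 rpredM ?natr_int.
- by rewrite derive1n_shift mul0r mulr0 rpred0.
Qed.

End Clos.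

Lemma dn_dvd k n : (0 < k <= n)%N -> (k %| dn n)%N.
Proof.
elim: n => [|n IH] /andP[k0 kn]; first by move: k0; rewrite lt0n; move: kn; rewrite leqn0 => ->.
rewrite /dn big_nat_recr //=.
case: (ltngtP k n.+1) kn => // [hk|->] _.
  by apply: dvdn_trans (IH _) (dvdn_lcml _ _); rewrite k0 -ltnS.
exact: dvdn_lcmr.
Qed.

Section Main.
Variable R : realType.
Variables (a n j : nat).
Hypothesis ha : (6 <= a)%N.
Hypothesis hj : (j <= n)%N.

Lemma P1_horner t : (P1 R n).[t] = poch (t - n%:R) n.
Proof. by rewrite horner_prod /poch; apply: eq_bigr => k _; rewrite hornerXsubC; ring. Qed.
Lemma P2_horner t : (P2 R n).[t] = poch (t + n%:R + 1) n.
Proof. by rewrite horner_prod /poch; apply: eq_bigr => k _; rewrite hornerXsubC; ring. Qed.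
Lemma P3_horner t : (P3 R n).[t] = n`!%:R.
Proof. by rewrite hornerC. Qed.

Lemma Rnj_eq : Rnj a n j = fun t => (t + n%:R / 2) *
  (Hf R n j (P1 R n) t ^+ 3 * (Hf R n j (P2 R n) t ^+ 3 * Hf R n j (P3 R n) t ^+ (a - 6))).
Proof.
apply/funext => t; rewrite /Rnj /Hf P1_horner P2_horner P3_horner /Lt prodrXl.
set L := \prod_(k < n.+1 | k != j :> nat) (t + k%:R).
have E : L ^+ a = L ^+ 3 * (L ^+ 3 * L ^+ (a - 6)).
  by rewrite -!exprD; congr (_ ^+ _); rewrite addnA subnKC.
rewrite E !expr_div_n !invfM.
set p1 := poch _ _; set p2 := poch _ _; set N := n`!%:R.
set Ne := N ^+ (a - 6); set Le := L ^+ (a - 6).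
ring.
Qed.

Lemma intP1 i : (i <= n)%N -> (P1 R n).[- i%:R] / n`!%:R \is a Num.int.
Proof.
move=> hi; rewrite P1_val // natrM mulrA mulfK ?fact_neq0 //.
by rewrite rpredM ?rpredX ?rpredN ?rpred1 ?natr_int.
Qed.
Lemma intP2 i : (i <= n)%N -> (P2 R n).[- i%:R] / n`!%:R \is a Num.int.
Proof. by move=> hi; rewrite P2_val // natrM mulfK ?fact_neq0 ?natr_int. Qed.
Lemma intP3 i : (i <= n)%N -> (P3 R n).[- i%:R] / n`!%:R \is a Num.int.
Proof. by move=> hi; rewrite P3_horner divff ?fact_neq0 ?rpred1. Qed.

Lemma Rnj_IntD : IntD (xs R j) (dn n) 2 (Rnj a n j).
Proof.
have hd : forall k, (0 < k <= n)%N -> (k %| dn n)%N by move=> k hk; exact: dn_dvd.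
have oU := U_open R j; have Ux0 := U_x0 R j.
have [s1 i1] := IntD_X oU Ux0 (Hf_smooth _ _ _ _ hj (size_P1 R n)) (Hf_IntD _ _ _ _ _ hj hd (size_P1 R n) intP1) 3.
have [s2 i2] := IntD_X oU Ux0 (Hf_smooth _ _ _ _ hj (size_P2 R n)) (Hf_IntD _ _ _ _ _ hj hd (size_P2 R n) intP2) 3.
have [s3 i3] := IntD_X oU Ux0 (Hf_smooth _ _ _ _ hj (size_P3 R n)) (Hf_IntD _ _ _ _ _ hj hd (size_P3 R n) intP3) (a - 6).
have hsh : 2 * (xs R j + n%:R / 2) \is a Num.int.
  have -> : 2 * (xs R j + n%:R / 2) = n%:R - (j + j)%:R :> R.
    by rewrite /xs natrD; field.
  by rewrite rpredB ?natr_int.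
have := IntD_M oU Ux0 (@smooth_shift R (U R j) (n%:R / 2)) (smoothM oU s1 (smoothM oU s2 s3))
  (IntD_shift (dn n) hsh) (IntD_M oU Ux0 s1 (smoothM oU s2 s3) i1 (IntD_M oU Ux0 s2 s3 i2 i3)).
by rewrite !mulr1 Rnj_eq.
Qed.

Lemma cc_int l : 2 * (dn n)%:R ^+ (a - l) * cc R a l j n \is a Num.int.
Proof. exact: (Rnj_IntD (a - l)%N). Qed.

End Main.

Lemma bin2_nat l : (l * l.+1 = 2 * 'C(l.+1, 2))%N.
Proof.
elim: l => [//|l IH]; rewrite binS bin1 mulnDr -IH; ring.
Qed.

Theorem mainTheorem3 (R : realType) (a n : nat) :
  (6 <= a)%N -> (1 <= n)%N ->
  (forall l : nat, (1 <= l <= a)%N ->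
     (2 * (dn n)%:R ^+ (a - l)) *: Pl R a l n \is a polyOver Num.int) /\
  (2 * (dn n)%:R ^+ (a + 2)) *: P0 R a n \is a polyOver Num.int.
Proof.
move=> ha hn; split.
  move=> l hl; apply/polyOverP => i; rewrite /Pl coefZ coef_sum mulr_sumr.
  apply: rpred_sum => j _; rewrite coefZ coefXn mulrA; apply: rpredM; last exact: natr_int.
  by apply: cc_int; rewrite -ltnS.
apply/polyOverP => i; rewrite /P0 coefZ coefN coef_sum mulrN rpredN mulr_sumr big_nat.
apply: rpred_sum => l /andP[hl1 hl2]; rewrite coef_sum mulr_sumr big_nat.
apply: rpred_sum => j /andP[hj1 hj2]; rewrite coef_sum mulr_sumr big_nat.
apply: rpred_sum => k /andP[hk1 hk2]; rewrite coefZ coefXn mulrA.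
apply: rpredM; last exact: natr_int.
have hjn : (j <= n)%N by rewrite -ltnS.
have hkn : (0 < k <= n)%N by rewrite hk1 (leq_trans _ hjn) // -ltnS.
have hc := @cc_int R a n j ha hjn l.
have hk : ((dn n)%:R / k%:R : R) \is a Num.int by rewrite -natf_div ?natr_int // dn_dvd.
have hla : (l <= a)%N by rewrite -ltnS.
rewrite (_ : (l * l.+1)%:R = 2 * 'C(l.+1, 2)%:R :> R); last by rewrite -natrM -bin2_nat.
rewrite (_ : (dn n)%:R ^+ (a + 2) = (dn n)%:R ^+ (a - l) * (dn n)%:R ^+ (l + 2) :> R);
  last by rewrite -exprD addnA subnK.
have hK : k%:R ^+ (l + 2) != 0 :> R by rewrite expf_neq0 // pnatr_eq0 -lt0n.
move: hc (rpredX (l + 2) hk); rewrite expr_div_n.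
set Da := (dn n)%:R ^+ (a - l); set Dl := (dn n)%:R ^+ (l + 2); set K := k%:R ^+ (l + 2).
set C := 'C(l.+1, 2)%:R; set c := cc R a l j n => hc hk'.
have -> : 2 * (Da * Dl) * (2 * C * c / (2 * K)) = (2 * Da * c) * C * (Dl / K).
  by field.
by apply: rpredM; [apply: rpredM; [exact: hc|exact: natr_int]|exact: hk'].
Qed.
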